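(* Let $G$ and $H$ be finite simple connected graphs, each of order at least $2$. If the Cartesian product $G \,\square\, H$ is well-dominated, then $\gamma(G \,\square\, H)=\gamma(G)\cdot n(H)=\gamma(H)\cdot n(G)$.
   Context: $n(X)$ is the order of $X$ and $\gamma(X)$ its domination number. A graph is well-dominated if every minimal (with respect to inclusion) dominating set is a minimum dominating set. The Cartesian product $G\,\square\, H$ has vertex set $V(G)\times V(H)$, with $(g_1,h_1)$ adjacent to $(g_2,h_2)$ iff either ($g_1=g_2$ and $h_1h_2\in E(H)$) or ($h_1=h_2$ and $g_1g_2\in E(G)$). *)

(* Defs.v *)
From mathcomp Require Import all_boot.
Set Implicit Arguments. Unset Strict Implicit. Unset Printing Implicit Defensive.

Definition simple_graph (T : finType) (e : rel T) : Prop :=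
  symmetric e /\ irreflexive e.

Definition connected_graph (T : finType) (e : rel T) : Prop :=
  forall x y : T, connect e x y.

Definition dominating (T : finType) (e : rel T) (D : {set T}) : bool :=
  [forall v, (v \in D) || [exists u in D, e u v]].

Definition minimal_dominating (T : finType) (e : rel T) (D : {set T}) : Prop :=
  dominating e D /\ forall D' : {set T}, D' \proper D -> ~~ dominating e D'.

(* domination number: minimum cardinality of a dominating set
   (the full vertex set always dominates) *)
Definition domination_number (T : finType) (e : rel T) : nat :=
  \big[minn/#|T|]_(D : {set T} | dominating e D) #|D|.

Definition minimum_dominating (T : finType) (e : rel T) (D : {set T}) : Prop :=
  dominating e D /\ #|D| = domination_number e.

Definition well_dominated (T : finType) (e : rel T) : Prop :=
  forall D : {set T}, minimal_dominating e D -> minimum_dominating e D.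

Definition cart_prod (T1 T2 : finType) (e1 : rel T1) (e2 : rel T2)
  : rel (T1 * T2)%type :=
  fun x y => ((x.1 == y.1) && e2 x.2 y.2) || ((x.2 == y.2) && e1 x.1 y.1).

(* Main.v *)
Require Import Defs.
From mathcomp Require Import all_boot.
From mathcomp Require Import zify.
Set Implicit Arguments. Unset Strict Implicit. Unset Printing Implicit Defensive.

Lemma dn_le (T : finType) (e : rel T) D :
  dominating e D -> domination_number e <= #|D|.
Proof.
move=> HD; rewrite /domination_number.
elim: (index_enum _) (mem_index_enum D) => [//|a s IH].
rewrite in_cons big_cons; case/orP => [/eqP <-|Ds]; first by rewrite HD geq_minl.
case: ifP => _; [exact: leq_trans (geq_minr _ _) (IH Ds) | exact: IH].
Qed.

Lemma dn_ex (T : finType) (e : rel T) :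
  exists2 D, dominating e D & #|D| = domination_number e.
Proof.
rewrite /domination_number.
apply: (big_ind (fun n => exists2 D, dominating e D & #|D| = n)).
- exists setT; last by rewrite cardsT.
  by apply/forallP=> v; rewrite in_setT.
- move=> x y [Dx Hx <-] [Dy Hy <-]; rewrite /minn; case: ltnP => _;
    [by exists Dx | by exists Dy].
- by move=> D HD; exists D.
Qed.

Definition priv (T : finType) (e : rel T) (D : {set T}) d g :=
  [&& (g \notin D), e d g & [forall d' in D, e d' g ==> (d' == d)]].

Definition score (T : finType) (e : rel T) (D : {set T}) :=
  #|[set x in D | [exists y in D, e x y]]|.

Lemma BC (T : finType) (e : rel T) :
  symmetric e -> irreflexive e -> (forall x, exists y, e x y) ->
  exists D, [/\ dominating e D, #|D| = domination_number e &
     forall d, d \in D -> exists g, priv e D d g].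
Proof.
move=> esym eirr noiso.
have [D0 HD0 cD0] := dn_ex e.
pose P D := dominating e D && (#|D| == domination_number e).
have P0 : P D0 by rewrite /P HD0 cD0 eqxx.
case: (arg_maxnP (score e) P0) => D /andP [HD /eqP cD] Dmax.
exists D; split => // d dD.
case: (boolP [exists g, priv e D d g]) => [/existsP [g Hg]|]; first by exists g.
rewrite negb_exists => /forallP Hnp.
have other : forall v, v \notin D -> e d v ->
    exists2 d', d' \in D & (e d' v && (d' != d)).
  move=> v vD edv; move: (Hnp v); rewrite /priv vD edv /= negb_forall_in.
  by case/existsP=> d' /andP [d'D]; rewrite negb_imply => H; exists d'.
have : ~~ dominating e (D :\ d).
  apply/negP => Hd; have := dn_le Hd; have := cardsD1 d D; rewrite dD; lia.
rewrite /dominating negb_forall => /existsP [v]; rewrite negb_or => /andP [vD' nbr].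
have Hv := forallP HD v.
have vd : v = d.
  case: (eqVneq v d) => // vnd; exfalso.
  have vD : v \notin D by move: vD'; rewrite in_setD1 vnd.
  move: Hv; rewrite (negbTE vD) /= => /existsP [u /andP [uD euv]].
  case: (eqVneq u d) => [ud|und].
    subst u; have [d' d'D /andP [ed'v d'nd]] := other v vD euv.
    by move/negP: nbr; apply; apply/existsP; exists d'; rewrite in_setD1 d'nd d'D.
  by move/negP: nbr; apply; apply/existsP; exists u; rewrite in_setD1 und uD.
subst v.
have [g edg] := noiso d.
have gD : g \notin D.
  apply/negP => gD; move/negP: nbr; apply; apply/existsP; exists g.
  rewrite in_setD1 gD esym edg andbT andbT.
  by apply/negP => /eqP gd; subst g; rewrite eirr in edg.
have [d2 d2D /andP [ed2g d2nd]] := other g gD edg.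
pose D' := g |: (D :\ d).
have HD' : dominating e D'.
  apply/forallP => v; rewrite !in_setU1 in_setD1.
  case: (eqVneq v d) => [->|vnd] /=.
    rewrite orbC; apply/orP; left; apply/existsP; exists g.
    by rewrite in_setU1 eqxx esym.
  have := forallP HD v; case/orP => [-> | /existsP [u /andP [uD euv]]]; first by rewrite orbT.
  apply/orP; right.
  case: (eqVneq u d) => [ud|und].
    subst u; case: (boolP (v \in D)) => vD.
      by apply/existsP; exists v; exfalso; move/negP: nbr; apply; apply/existsP;
        exists v; rewrite in_setD1 vnd vD esym.
    have [d' d'D /andP [ed'v d'nd]] := other v vD euv.
    by apply/existsP; exists d'; rewrite in_setU1 in_setD1 d'nd d'D orbT.
  by apply/existsP; exists u; rewrite in_setU1 in_setD1 und uD orbT.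
have cD' : #|D'| = domination_number e.
  rewrite cardsU1 in_setD1 (negbTE gD) andbF /=.
  move: (domination_number e) cD => n cD.
  by rewrite -cD (cardsD1 d D) dD.
have PD' : P D' by rewrite /P HD' cD' eqxx.
have := Dmax D' PD'.
suff : score e D < score e D'.
  by move=> H1 H2; move: (leq_trans H1 H2); rewrite ltnn.
apply: proper_card; apply/properP; split.
  apply/subsetP => x; rewrite !inE => /andP [xD /existsP [y /andP [yD exy]]].
  have xnd : x != d.
    apply/negP=> /eqP xd; subst x; move/negP: nbr; apply; apply/existsP; exists y.
    rewrite in_setD1 yD esym exy andbT andbT.
    by apply/negP => /eqP yd; subst y; rewrite eirr in exy.
  have ynd : y != d.
    apply/negP=> /eqP yd; subst y; move/negP: nbr; apply; apply/existsP; exists x.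
    by rewrite in_setD1 xD xnd exy.
  rewrite xD xnd orbT /=; apply/existsP; exists y.
  by rewrite in_setU1 in_setD1 yD ynd orbT.
exists g; last by rewrite inE (negbTE gD).
rewrite !inE eqxx /=; apply/existsP; exists d2.
by rewrite in_setU1 in_setD1 d2D d2nd orbT esym.
Qed.

Lemma prod_min1 (T1 T2 : finType) (e1 : rel T1) (e2 : rel T2) (D : {set T1}) :
  dominating e1 D -> (forall d, d \in D -> exists g, priv e1 D d g) ->
  minimal_dominating (cart_prod e1 e2) (setX D [set: T2]).
Proof.
move=> HD Hp; split.
  apply/forallP => [[g h]]; rewrite in_setX in_setT andbT /=.
  case/orP: (forallP HD g) => [-> // | /existsP [u /andP [uD eug]]].
  apply/orP; right; apply/existsP; exists (u, h).
  by rewrite in_setX in_setT uD /cart_prod /= eqxx eug orbT.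
move=> D' /properP [sub [[d h] dh dhD']].
move: dh; rewrite in_setX in_setT /= andbT => dD.
have [g /and3P [gD edg /forall_inP pg]] := Hp d dD.
apply/negP => Hdom; have := forallP Hdom (g, h).
have ghD' : (g, h) \notin D'.
  by apply/negP => /(subsetP sub); rewrite in_setX (negbTE gD).
rewrite (negbTE ghD') /= => /existsP [[u k] /andP [ukD']].
have := subsetP sub _ ukD'; rewrite in_setX in_setT andbT /= => uD.
rewrite /cart_prod /= => /orP [/andP [/eqP ug _] | /andP [/eqP kh eug]].
  by subst u; rewrite uD in gD.
subst k; have := implyP (pg u uD) eug => /eqP ud; subst u.
by rewrite ukD' in dhD'.
Qed.

Lemma prod_min2 (T1 T2 : finType) (e1 : rel T1) (e2 : rel T2) (D : {set T2}) :
  dominating e2 D -> (forall d, d \in D -> exists g, priv e2 D d g) ->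
  minimal_dominating (cart_prod e1 e2) (setX [set: T1] D).
Proof.
move=> HD Hp; split.
  apply/forallP => [[g h]]; rewrite in_setX in_setT /=.
  case/orP: (forallP HD h) => [-> // | /existsP [u /andP [uD eug]]].
  apply/orP; right; apply/existsP; exists (g, u).
  by rewrite in_setX in_setT uD /cart_prod /= eqxx eug.
move=> D' /properP [sub [[h d] dh dhD']].
move: dh; rewrite in_setX in_setT /= => dD.
have [g /and3P [gD edg /forall_inP pg]] := Hp d dD.
apply/negP => Hdom; have := forallP Hdom (h, g).
have ghD' : (h, g) \notin D'.
  by apply/negP => /(subsetP sub); rewrite in_setX (negbTE gD) andbF.
rewrite (negbTE ghD') /= => /existsP [[k u] /andP [ukD']].
have := subsetP sub _ ukD'; rewrite in_setX in_setT /= => uD.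
rewrite /cart_prod /= => /orP [/andP [/eqP kh eug] | /andP [/eqP ug _]]; last first.
  by subst u; rewrite uD in gD.
subst k; have := implyP (pg u uD) eug => /eqP ud; subst u.
by rewrite ukD' in dhD'.
Qed.

Lemma noiso_of (T : finType) (e : rel T) :
  connected_graph e -> 2 <= #|T| -> forall x, exists y, e x y.
Proof.
move=> Hc H2 x.
have [y yx] : exists y, y \in [set~ x].
  apply/set0Pn; rewrite -card_gt0 cardsC1; lia.
rewrite !inE in yx.
case/connectP: (Hc x y) => [[|z p]] /=.
  by move=> _ yE; rewrite yE eqxx in yx.
by move=> /andP [exz _] _; exists z.
Qed.

Theorem proposition16 (T1 T2 : finType) (e1 : rel T1) (e2 : rel T2) :
  simple_graph e1 -> simple_graph e2 ->
  connected_graph e1 -> connected_graph e2 ->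
  2 <= #|T1| -> 2 <= #|T2| ->
  well_dominated (cart_prod e1 e2) ->
  domination_number (cart_prod e1 e2) = domination_number e1 * #|T2| /\
  domination_number e1 * #|T2| = domination_number e2 * #|T1|.
Proof.
move=> [s1 i1] [s2 i2] c1 c2 n1 n2 wd.
have [D1 [HD1 cD1 P1]] := BC s1 i1 (noiso_of c1 n1).
have [D2 [HD2 cD2 P2]] := BC s2 i2 (noiso_of c2 n2).
have [_ E1] := wd _ (prod_min1 e2 HD1 P1).
have [_ E2] := wd _ (prod_min2 e1 HD2 P2).
rewrite cardsX cardsT cD1 in E1.
rewrite cardsX cardsT cD2 in E2.
by split; [rewrite E1 | rewrite E1 -E2 mulnC].
Qed.
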